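(* Let $\alpha,\beta,\gamma,\delta\ge0$ with $\alpha+\beta+\gamma+\delta=1$, $\beta>0$, $\delta>0$, $\alpha+\gamma>0$. Put $\xi:=\alpha+\beta$, $D:=4\beta\delta+(2\xi-1)^2$, $\mu:=\frac{1-\sqrt D}{2}$. Then $$h(\mu)\ \ge\ h(\xi)-(\beta+\delta)\,h\Bigl(\frac{\beta}{\beta+\delta}\Bigr).$$
   Context: $h(t)=-t\log t-(1-t)\log(1-t)$ is the binary entropy function on $[0,1]$. *)

(* Defs.v *)
From Stdlib Require Import Reals.
Open Scope R_scope.

Definition xlogx (t : R) : R := if Req_EM_T t 0 then 0 else t * ln t.

Definition h (t : R) : R := - xlogx t - xlogx (1 - t).

(* Main.v *)
Require Import Defs.
From Stdlib Require Import Reals.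
Open Scope R_scope.
From Stdlib Require Import Reals Lra.
From Coquelicot Require Import Coquelicot.

Lemma mono_le (f df : R -> R) (a b x y : R):
  a < x -> x <= y -> y < b ->
  (forall z, a < z < b -> is_derive f z (df z)) ->
  (forall z, x <= z <= y -> 0 <= df z) -> f x <= f y.
Proof.
  intros Hax Hxy Hyb Hd Hp.
  destruct (Req_dec x y) as [E|E]; [subst; lra|].
  destruct (MVT_gen f x y df) as [c [Hc Heq]].
  - intros z Hz. apply Hd. rewrite Rmin_left in Hz by lra. rewrite Rmax_right in Hz by lra. lra.
  - intros z Hz. rewrite Rmin_left in Hz by lra. rewrite Rmax_right in Hz by lra.
    apply continuity_pt_filterlim. apply (ex_derive_continuous (K:=R_AbsRing) (V:=R_NormedModule)).
    exists (df z). apply Hd. lra.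
  - rewrite Rmin_left in Hc by lra. rewrite Rmax_right in Hc by lra.
    assert (0 <= df c * (y - x)) by (apply Rmult_le_pos; [apply Hp; lra| lra]). lra.
Qed.

Lemma ln_le_sub1 t : 0 < t -> ln t <= t - 1.
Proof. intros H. pose proof (exp_ineq1_le (ln t)). rewrite exp_ln in H0; lra. Qed.

Lemma tln_ge t : 0 < t -> t - 1 <= t * ln t.
Proof.
  intros H. pose proof (ln_le_sub1 (/ t) (Rinv_0_lt_compat _ H)).
  rewrite ln_Rinv in H0 by lra.
  apply Rmult_le_compat_l with (r := t) in H0; [|lra].
  rewrite Rmult_minus_distr_l, Rinv_r in H0 by lra. lra.
Qed.

Lemma k_mono x y : 0 < x -> x <= y -> y < 1 -> ln x / (1 - x) <= ln y / (1 - y).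
Proof.
  intros H1 H2 H3.
  apply (mono_le (fun t => ln t / (1 - t)) (fun t => (1 - t + t * ln t) / (t * (1-t)^2)) 0 1); try lra.
  - intros z Hz. auto_derive. lra. field. lra.
  - intros z Hz. apply Rdiv_le_0_compat.
    + pose proof (tln_ge z). lra.
    + apply Rmult_lt_0_compat; [lra|]. apply pow_lt; lra.
Qed.

Lemma l_mono x y : 0 < x -> x <= y -> y < 1 -> - (x * ln x) / (1 - x) <= - (y * ln y) / (1 - y).
Proof.
  intros H1 H2 H3.
  apply (mono_le (fun t => - (t * ln t) / (1 - t)) (fun t => (t - 1 - ln t) / ((1-t)^2)) 0 1); try lra.
  - intros z Hz. auto_derive. lra. field. lra.
  - intros z Hz. apply Rdiv_le_0_compat.
    + pose proof (ln_le_sub1 z). lra.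
    + apply pow_lt; lra.
Qed.

Definition hh (t : R) : R := - (t * ln t) - (1 - t) * ln (1 - t).

Lemma P1 t : 0 < t <= 1/2 -> t * ln t <= (1 - t) * ln (1 - t).
Proof.
  intros H. pose proof (k_mono t (1 - t) ltac:(lra) ltac:(lra) ltac:(lra)) as K.
  replace (1 - (1 - t)) with t in K by ring.
  replace (t * ln t) with ((t * (1 - t)) * (ln t / (1 - t))) by (field; lra).
  replace ((1 - t) * ln (1 - t)) with ((t * (1 - t)) * (ln (1 - t) / t)) by (field; lra).
  apply Rmult_le_compat_l; [|exact K]. apply Rmult_le_pos; lra.
Qed.

Lemma P2 t : 0 < t <= 1/2 -> - (t^2 * ln t) <= - ((1 - t)^2 * ln (1 - t)).
Proof.
  intros H. pose proof (l_mono t (1 - t) ltac:(lra) ltac:(lra) ltac:(lra)) as K.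
  replace (1 - (1 - t)) with t in K by ring.
  replace (- (t^2 * ln t)) with ((t * (1 - t)) * (- (t * ln t) / (1 - t))) by (field; lra).
  replace (- ((1 - t)^2 * ln (1 - t))) with ((t * (1 - t)) * (- ((1 - t) * ln (1 - t)) / t)) by (field; lra).
  apply Rmult_le_compat_l; [|exact K]. apply Rmult_le_pos; lra.
Qed.

Lemma hh_nonneg t : 0 < t < 1 -> 0 <= hh t.
Proof.
  intros H. unfold hh.
  assert (ln t <= 0) by (pose proof (ln_le_sub1 t); lra).
  assert (ln (1 - t) <= 0) by (pose proof (ln_le_sub1 (1 - t)); lra).
  assert (0 <= t * - ln t) by (apply Rmult_le_pos; lra).
  assert (0 <= (1 - t) * - ln (1 - t)) by (apply Rmult_le_pos; lra).
  lra.
Qed.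

Lemma Gf_mono t1 t2 : 0 < t1 -> t1 <= t2 -> t2 <= 1/2 ->
  hh t2 / (t2 * (1 - t2)) <= hh t1 / (t1 * (1 - t1)).
Proof.
  intros H1 H2 H3.
  cut (- (hh t1 / (t1 * (1 - t1))) <= - (hh t2 / (t2 * (1 - t2)))). lra.
  apply (mono_le (fun t => - (hh t / (t * (1 - t))))
     (fun t => (t^2 * ln t - (1 - t)^2 * ln (1 - t)) / (t * (1 - t))^2) 0 1); try lra.
  - intros z Hz. unfold hh. auto_derive. repeat split; try lra.
    apply Rgt_not_eq, Rmult_lt_0_compat; lra.
    replace (1 + - z) with (1 - z) by ring. field. lra.
  - intros z Hz. apply Rdiv_le_0_compat.
    + pose proof (P2 z ltac:(lra)). lra.
    + apply pow_lt, Rmult_lt_0_compat; lra.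
Qed.

Lemma F2_mono t1 t2 : 0 < t1 -> t1 <= t2 -> t2 <= 1/2 ->
  hh t1 ^ 2 / (t1 * (1 - t1)) <= hh t2 ^ 2 / (t2 * (1 - t2)).
Proof.
  intros H1 H2 H3.
  apply (mono_le (fun t => hh t ^ 2 / (t * (1 - t)))
     (fun t => hh t * (- (t * ln t) + (1 - t) * ln (1 - t)) / (t * (1 - t))^2) 0 1); try lra.
  - intros z Hz. unfold hh. auto_derive. repeat split; try lra.
    apply Rgt_not_eq, Rmult_lt_0_compat; lra.
    replace (1 + - z) with (1 - z) by ring. field. lra.
  - intros z Hz. apply Rdiv_le_0_compat.
    + apply Rmult_le_pos. apply hh_nonneg; lra. pose proof (P1 z ltac:(lra)). lra.
    + apply pow_lt, Rmult_lt_0_compat; lra.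
Qed.


Lemma h_eq t : 0 < t < 1 -> h t = hh t.
Proof.
  intros H. unfold h, hh, xlogx.
  destruct (Req_EM_T t 0); [lra|]. destruct (Req_EM_T (1 - t) 0); [lra|]. ring.
Qed.

Lemma h0 : h 0 = 0.
Proof.
  unfold h, xlogx. destruct (Req_EM_T 0 0); [|lra].
  destruct (Req_EM_T (1 - 0) 0); [lra|]. replace (1 - 0) with 1 by ring. rewrite ln_1. ring.
Qed.

Lemma h_sym t : h (1 - t) = h t.
Proof. unfold h. replace (1 - (1 - t)) with t by ring. ring. Qed.

Lemma le_of_prod a b : 0 <= a <= 1/2 -> 0 <= b <= 1/2 -> a * (1 - a) <= b * (1 - b) -> a <= b.
Proof. intros. nra. Qed.

Lemma subadd a b c : 0 <= a <= 1/2 -> 0 < b <= 1/2 -> 0 < c <= 1/2 ->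
  a * (1 - a) + b * (1 - b) = c * (1 - c) -> h c <= h a + h b.
Proof.
  intros Ha Hb Hc E.
  destruct (Req_dec a 0) as [Z|Z].
  - subst a. rewrite h0.
    assert (b <= c) by (apply le_of_prod; lra).
    assert (c <= b) by (apply le_of_prod; lra).
    replace c with b by lra. lra.
  - assert (Ha' : 0 < a) by lra.
    assert (a <= c) by (apply le_of_prod; nra).
    assert (b <= c) by (apply le_of_prod; nra).
    pose proof (Gf_mono a c Ha' ltac:(lra) ltac:(lra)) as G1.
    pose proof (Gf_mono b c ltac:(lra) ltac:(lra) ltac:(lra)) as G2.
    rewrite !h_eq by lra.
    assert (PA : 0 < a * (1 - a)) by nra.
    assert (PB : 0 < b * (1 - b)) by nra.
    assert (PC : 0 < c * (1 - c)) by nra.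
    apply Rmult_le_compat_r with (r := a * (1 - a)) in G1; [|lra].
    apply Rmult_le_compat_r with (r := b * (1 - b)) in G2; [|lra].
    replace (hh a / (a * (1 - a)) * (a * (1 - a))) with (hh a) in G1 by (field; lra).
    replace (hh b / (b * (1 - b)) * (b * (1 - b))) with (hh b) in G2 by (field; lra).
    assert (K : hh c / (c * (1 - c)) * (a * (1 - a)) + hh c / (c * (1 - c)) * (b * (1 - b)) = hh c)
      by (rewrite <- Rmult_plus_distr_l, E; field; lra).
    lra.
Qed.

Lemma nu_step n p s : 0 < n <= 1/2 -> 0 < p <= 1/2 -> 0 < s <= 1 ->
  n * (1 - n) = s^2 * (p * (1 - p)) -> h n <= s * h p.
Proof.
  intros Hn Hp Hs E.
  assert (PP0 : 0 < p * (1 - p)) by nra.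
  assert (S2 : s^2 <= 1) by nra.
  assert (n <= p).
  { apply le_of_prod; try lra. rewrite E.
    apply Rmult_le_compat_r with (r := p * (1 - p)) in S2; lra. }
  pose proof (F2_mono n p ltac:(lra) ltac:(lra) ltac:(lra)) as F.
  rewrite !h_eq by lra.
  assert (PN : 0 < n * (1 - n)) by nra.
  assert (PP : 0 < p * (1 - p)) by nra.
  apply Rmult_le_compat_r with (r := p * (1 - p)) in F; [|lra].
  replace (hh p ^ 2 / (p * (1 - p)) * (p * (1 - p))) with (hh p ^ 2) in F by (field; lra).
  replace (hh n ^ 2 / (n * (1 - n)) * (p * (1 - p))) with (hh n ^ 2 / s^2) in F
    by (rewrite E; field; lra).
  assert (hh n ^ 2 <= (s * hh p)^2).
  { apply Rmult_le_compat_r with (r := s^2) in F; [|nra].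
    replace (hh n ^ 2 / s ^ 2 * s ^ 2) with (hh n ^ 2) in F by (field; lra). nra. }
  pose proof (hh_nonneg n ltac:(lra)). pose proof (hh_nonneg p ltac:(lra)).
  assert (0 <= s * hh p) by (apply Rmult_le_pos; lra).
  destruct (Rle_or_lt (hh n) (s * hh p)) as [|L]; auto. exfalso.
  assert ((s * hh p) * (s * hh p) < hh n * hh n) by (apply Rmult_le_0_lt_compat; lra).
  simpl in *. lra.
Qed.

Lemma T_props u : 0 < u <= 1/4 ->
  0 < (1 - sqrt (1 - 4 * u)) / 2 <= 1/2 /\
  (1 - sqrt (1 - 4 * u)) / 2 * (1 - (1 - sqrt (1 - 4 * u)) / 2) = u.
Proof.
  intros H. pose proof (sqrt_pos (1 - 4 * u)) as P.
  pose proof (sqrt_sqrt (1 - 4 * u) ltac:(lra)) as Q.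
  set (q := sqrt (1 - 4 * u)) in *.
  assert (q < 1) by nra.
  split; [lra|]. field_simplify. nra.
Qed.

Theorem mainTheorem4 (alpha beta gamma delta : R) :
  0 <= alpha -> 0 <= beta -> 0 <= gamma -> 0 <= delta ->
  alpha + beta + gamma + delta = 1 ->
  0 < beta -> 0 < delta -> 0 < alpha + gamma ->
  let xi := alpha + beta in
  let D := 4 * beta * delta + (2 * xi - 1) ^ 2 in
  let mu := (1 - sqrt D) / 2 in
  h mu >= h xi - (beta + delta) * h (beta / (beta + delta)).
Proof.
  intros Ha Hb Hg Hd Hsum Hb' Hd' Hag xi D mu.
  assert (Hgam : gamma = 1 - alpha - beta - delta) by lra.
  assert (HD : 1 - D = 4 * (xi * (1 - xi) - beta * delta)).
  { unfold D. ring. }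
  assert (Hq : xi * (1 - xi) - beta * delta = alpha * gamma + alpha * delta + beta * gamma).
  { unfold xi. rewrite Hgam. ring. }
  assert (Q0 : 0 <= alpha * gamma + alpha * delta + beta * gamma).
  { pose proof (Rmult_le_pos _ _ Ha Hg). pose proof (Rmult_le_pos _ _ Ha Hd).
    pose proof (Rmult_le_pos _ _ Hb Hg). lra. }
  assert (D0 : 0 <= D) by (unfold D; pose proof (pow2_ge_0 (2 * xi - 1)); nra).
  assert (D1 : D <= 1) by lra.
  pose proof (sqrt_pos D) as SP. pose proof (sqrt_sqrt D D0) as SS.
  assert (Hmu : 0 <= mu <= 1/2 /\ mu * (1 - mu) = xi * (1 - xi) - beta * delta).
  { unfold mu. set (q := sqrt D) in *. assert (q <= 1) by nra. split; [lra|].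
    field_simplify. nra. }
  set (s := beta + delta).
  assert (Hs : 0 < s < 1) by (unfold s; lra).
  assert (Hbd : 0 < beta * delta <= 1/4) by (pose proof (pow2_ge_0 (beta - delta)); unfold s in Hs; split; [nra|]; nra).
  destruct (T_props (beta * delta) Hbd) as [Hnu1 Hnu2].
  set (nu := (1 - sqrt (1 - 4 * (beta * delta))) / 2) in *.
  set (p0 := beta / s).
  assert (Hp0 : p0 * (1 - p0) * s^2 = beta * delta) by (unfold p0, s in *; field; lra).
  assert (Hp0r : 0 < p0 < 1).
  { unfold p0. split. apply Rdiv_lt_0_compat; lra.
    apply (Rmult_lt_reg_r s); [lra|].
    replace (beta / s * s) with beta by (field; lra). unfold s; lra. }
  assert (HP : exists p', 0 < p' <= 1/2 /\ p' * (1 - p') = p0 * (1 - p0) /\ h p' = h p0).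
  { destruct (Rle_or_lt p0 (1/2)).
    - exists p0. split; [lra|]. split; reflexivity.
    - exists (1 - p0). split; [lra|]. split; [ring|]. apply h_sym. }
  destruct HP as [p' [Hp'1 [Hp'2 Hp'3]]].
  assert (HT : exists tau, 0 < tau <= 1/2 /\ tau * (1 - tau) = xi * (1 - xi) /\ h tau = h xi).
  { assert (0 < xi < 1) by (unfold xi; lra).
    destruct (Rle_or_lt xi (1/2)).
    - exists xi. split; [lra|]. split; reflexivity.
    - exists (1 - xi). split; [lra|]. split; [ring|]. apply h_sym. }
  destruct HT as [tau [Ht1 [Ht2 Ht3]]].
  assert (S1 : h tau <= h mu + h nu).
  { apply subadd; try lra. }
  assert (S2 : h nu <= s * h p').
  { apply nu_step; try lra. rewrite Hnu2, Hp'2, <- Hp0. ring. }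
  fold p0. rewrite <- Hp'3, <- Ht3. lra.
Qed.
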